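(* For $n\ge1$, $\left|\Pi_n\wr C_2(1^11^1,1^11^2,1^12^2)\right|=\sum_{k=0}^n\binom{n}{k}\left\lfloor k/2 \right\rfloor!$.
   Context: For $n\ge0$ let $[n]=\{1,\dots,n\}$. A $2$-colored set partition of $[n]$ is a set partition of $[n]$ together with an assignment of a color from $\{1,2\}$ to each element; $\Pi_n\wr C_2$ is the set of these. For a set $S$ of patterns, $\Pi_n\wr C_2(S)$ is the set of such colored partitions avoiding every pattern in $S$ in the pattern sense. For the patterns used here: $\sigma$ contains $1^11^1$ iff two elements in the same block have the same color; $1^11^2$ iff there are $i<j$ in the same block with $i$ colored $1$ and $j$ colored $2$; $1^12^2$ iff there are $i<j$ in different blocks with $i$ colored $1$ and $j$ colored $2$. *)

(* Defs.v *)
From mathcomp Require Import all_boot.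
Set Implicit Arguments. Unset Strict Implicit. Unset Printing Implicit Defensive.

(* [n] = {1..n} is represented by 'I_n = {0..n-1} (order-preserving shift).
   Colors {1,2} are represented by 'I_2: color 1 = ord0, color 2 = ord_max (value 1). *)

Definition colored_partition (n : nat) :=
  ({set {set 'I_n}} * {ffun 'I_n -> 'I_2})%type.

Definition is_set_partition n (P : {set {set 'I_n}}) : bool :=
  partition P [set: 'I_n].

Definition same_block n (P : {set {set 'I_n}}) (i j : 'I_n) : bool :=
  [exists B in P, (i \in B) && (j \in B)].

Definition col_is n (c : {ffun 'I_n -> 'I_2}) (i : 'I_n) (k : nat) : bool :=
  (nat_of_ord (c i)) == k.-1.

Definition contains_11_11 n (x : colored_partition n) : bool :=
  [exists i : 'I_n, exists j : 'I_n,
     (i < j) && same_block x.1 i j && (x.2 i == x.2 j)].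

Definition contains_11_12 n (x : colored_partition n) : bool :=
  [exists i : 'I_n, exists j : 'I_n,
     [&& i < j, same_block x.1 i j, col_is x.2 i 1 & col_is x.2 j 2]].

Definition contains_11_22 n (x : colored_partition n) : bool :=
  [exists i : 'I_n, exists j : 'I_n,
     [&& i < j, ~~ same_block x.1 i j, col_is x.2 i 1 & col_is x.2 j 2]].

Definition avoiders n : {set colored_partition n} :=
  [set x : colored_partition n | [&& is_set_partition x.1,
      ~~ contains_11_11 x, ~~ contains_11_12 x & ~~ contains_11_22 x]].

(* Main.v *)
Require Import Defs.
From mathcomp Require Import all_boot.
From mathcomp Require Import zify.
Set Implicit Arguments. Unset Strict Implicit. Unset Printing Implicit Defensive.

Fixpoint tm (m k : nat) : nat :=
  match m with 0 => 1 | m'.+1 => tm m' k + k * tm m' k.-1 end.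

Section Match.
Variable T : finType.

Definition matchb (A B : {set T}) (M : {set T * T}) : bool :=
  [forall p, (p \in M) ==> (p.1 \in A) && (p.2 \in B)] &&
  [forall p, forall q, [&& p \in M & q \in M] ==> ((p.1 == q.1) == (p.2 == q.2))].

Lemma matchP (A B : {set T}) (M : {set T * T}) :
  reflect ((forall p, p \in M -> p.1 \in A /\ p.2 \in B) /\
           (forall p q, p \in M -> q \in M -> (p.1 == q.1) = (p.2 == q.2)))
          (matchb A B M).
Proof.
apply: (iffP andP) => [[/forallP h1 /forallP h2]|[h1 h2]]; split.
- by move=> p /(implyP (h1 p)) /andP.
- by move=> p q pM qM; move/forallP: (h2 p) => /(_ q); rewrite pM qM /= => /eqP.
- by apply/forallP => p; apply/implyP => /h1 [-> ->].
- by apply/forallP => p; apply/forallP => q; apply/implyP => /andP [pM qM]; rewrite (h2 p q pM qM).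
Qed.

Definition Q A B := #|[set M | matchb A B M]|.

Lemma Q0 B : Q set0 B = 1.
Proof.
rewrite /Q (_ : [set M | matchb set0 B M] = [set set0]) ?cards1 //.
apply/setP => M; rewrite !inE; apply/idP/idP.
  move/matchP => [h _]; apply/eqP/setP => p; rewrite inE.
  by apply/idP => /h; rewrite inE => -[].
move/eqP ->; apply/matchP; split => p; by rewrite inE.
Qed.

Lemma sumB (U : finType) (D : {pred U}) (P : pred U) :
  \sum_(i in D) (P i : nat) = #|[set i in D | P i]|.
Proof.
rewrite -sum1_card big_mkcond [RHS]big_mkcond /=; apply: eq_bigr => i _.
by rewrite inE; case: (i \in D); case: (P i).
Qed.

Lemma Q_rec (A B : {set T}) a : a \in A ->
  Q A B = Q (A :\ a) B + \sum_(b in B) Q (A :\ a) (B :\ b).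
Proof.
move=> aA.
set S := [set M | matchb A B M].
have step1: #|S| = \sum_(M in S) ((~~ [exists b, (a,b) \in M]) + \sum_(b in B) ((a,b) \in M)).
  rewrite -sum1_card; apply: eq_bigr => M; rewrite inE => /matchP [h1 h2].
  case: (boolP [exists b, (a,b) \in M]) => [/existsP [b0 hb0]|/existsPn hn] /=.
  - rewrite (bigD1 b0) /=; last by have [] := h1 _ hb0.
    rewrite hb0 big1 // => b /andP [_ nb]; case hb: ((a, b) \in M) => //.
    have := h2 _ _ hb0 hb; rewrite /= eqxx => /esym/eqP b0b.
    by rewrite b0b eqxx in nb.
  - by rewrite big1 // => b _; rewrite (negbTE (hn b)).
rewrite /Q -/S step1 big_split /= sumB exchange_big /=.
have E0 : [set M in S | ~~ [exists b, (a, b) \in M]] = [set M | matchb (A :\ a) B M].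
  apply/setP => M; rewrite !inE; apply/andP/matchP.
    move=> [/matchP [h1 h2] /existsPn hn]; split; last exact: h2.
    move=> p pM; have [pA pB] := h1 p pM; split => //; rewrite !inE pA andbT.
    apply/eqP => e; move: (hn p.2); by rewrite -e -surjective_pairing pM.
  move=> [h1 h2]; split.
    apply/matchP; split; last exact: h2.
    by move=> p /h1 []; rewrite inE => /andP [_ ->] ->.
  apply/existsPn => b; apply/negP => hb; have [] := h1 _ hb.
  by rewrite /= !inE eqxx.
rewrite E0; apply: f_equal; apply: eq_bigr => b bB; rewrite sumB.
have ninj : {in [set M | matchb (A :\ a) (B :\ b) M] &, injective (fun M : {set T * T} => (a, b) |: M)}.
  move=> M1 M2; rewrite !inE => /matchP [h1 _] /matchP [h1' _] e.
  have n1 : (a, b) \notin M1 by apply/negP => /h1 []; rewrite !inE eqxx.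
  have n2 : (a, b) \notin M2 by apply/negP => /h1' []; rewrite !inE eqxx.
  by rewrite -(setU1K n1) -(setU1K n2) e.
rewrite -(card_in_imset ninj); apply: eq_card => M; rewrite inE.
apply/andP/imsetP.
  move=> [MS abM]; exists (M :\ (a, b)); last by rewrite setD1K.
  move: MS; rewrite /S inE => /matchP [h1 h2].
  rewrite inE; apply/matchP; split; last first.
    by move=> p q; rewrite !inE => /andP [_ pM] /andP [_ qM]; apply: h2.
  move=> p; rewrite !inE => /andP [npab pM]; have [pA pB] := h1 p pM.
  have e := h2 _ _ pM abM; rewrite /= in e.
  move: npab; rewrite [p]surjective_pairing xpair_eqE /= e andbb => nb.
  by rewrite pA pB nb.
move=> [M' hM' ->]; split; last by rewrite !inE eqxx.
move: hM'; rewrite inE => /matchP [h1 h2].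
rewrite inE; apply/matchP; split.
  move=> p; rewrite !inE => /orP [/eqP -> | /h1 []]; first by rewrite /= aA bB.
  by rewrite !inE => /andP [_ ->] /andP [_ ->].
move=> p q; rewrite !inE => /orP [/eqP -> | pM] /orP [/eqP -> | qM] /=; rewrite ?eqxx //.
- have [] := h1 q qM; rewrite !inE => /andP [n1 _] /andP [n2 _].
  by rewrite eq_sym (negbTE n1) eq_sym (negbTE n2).
- have [] := h1 p pM; rewrite !inE => /andP [n1 _] /andP [n2 _].
  by rewrite (negbTE n1) (negbTE n2).
- exact: h2.
Qed.

Lemma Q_tm k : forall (A B : {set T}), #|A| = k -> Q A B = tm k #|B|.
Proof.
elim: k => [|k IH] A B hA.
  by move/eqP: hA; rewrite cards_eq0 => /eqP ->; rewrite Q0.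
have /card_gt0P [a aA] : 0 < #|A| by rewrite hA.
have hA' : #|A :\ a| = k by move: hA; rewrite (cardsD1 a) aA; case.
rewrite (Q_rec _ aA) IH //= ; apply: f_equal.
rewrite (eq_bigr (fun _ => tm k #|B|.-1)) ?sum_nat_const //.
move=> b bB; rewrite IH //; by rewrite (cardsD1 b B) bB.
Qed.

End Match.


Lemma aux B x z y i k : k * x = i.+1 * y -> k * (B*x*z) = B*y*(i.+1 * z).
Proof. move=> h. by rewrite mulnA [k * (B * x)]mulnCA h -!mulnA (mulnCA i.+1). Qed.

Lemma tm_closed m k N : m < N ->
  tm m k = \sum_(j < N) 'C(m, j) * 'C(k, j) * j`!.
Proof.
elim: m k N => [|m IH] k N hN.
  case: N hN => [//|N] _. rewrite big_ord_recl /= bin0.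
  rewrite big1; first by rewrite bin0.
  by move=> i _; rewrite bin0n.
case: N hN => [//|N] hN /=.
rewrite (IH k N.+1) ?(IH k.-1 N) //; last by lia.
rewrite big_ord_recl [in RHS]big_ord_recl !bin0 /= -addnA; apply: f_equal.
rewrite big_distrr -big_split /=; apply: eq_bigr => i _.
rewrite /bump /= add1n binS !mulnDl; apply: f_equal.
rewrite factS; apply: aux; exact: mul_bin_diag.
Qed.

Lemma hockey n a : \sum_(m < n.+1) 'C(m, a) = 'C(n.+1, a.+1).
Proof.
elim: n => [|n IH].
  rewrite big_ord1; case: a => [|a]; first by rewrite bin0 bin1.
  by rewrite bin0n bin_small.
by rewrite big_ord_recr /= IH [RHS]binS.
Qed.

Lemma vdm n a b : \sum_(m < n.+1) 'C(m, a) * 'C(n - m, b) = 'C(n.+1, (a + b).+1).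
Proof.
elim: n b => [|n IH] b.
  rewrite big_ord1 /= subnn; case: a => [|a]; case: b => [|b];
    rewrite ?bin0 ?bin0n ?bin1 ?muln0 ?mul0n ?bin_small //; lia.
case: b => [|b].
  by rewrite addn0 -hockey; under eq_bigr do rewrite bin0 muln1.
rewrite big_ord_recr /= subnn bin0n muln0 addn0.
rewrite (_ : \sum_(i < n.+1) 'C(i, a) * 'C(n.+1 - i, b.+1) =
   \sum_(i < n.+1) 'C(i, a) * 'C(n - i, b.+1) + \sum_(i < n.+1) 'C(i, a) * 'C(n - i, b)).
  by rewrite !IH addnS binS.
rewrite -big_split /=; apply: eq_bigr => i _.
by rewrite -mulnDr subSn ?binS // -ltnS.
Qed.

Lemma sum_pairs (F : nat -> nat) N :
  \sum_(k < N.*2) F k = \sum_(j < N) (F j.*2 + F j.*2.+1).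
Proof.
elim: N => [|N IH]; first by rewrite !big_ord0.
by rewrite doubleS !big_ord_recr /= IH addnA.
Qed.

Lemma partC n :
  \sum_(m < n.+1) tm m (n - m) = \sum_(0 <= k < n.+1) 'C(n, k) * (k./2)`!.
Proof.
rewrite (eq_bigr (fun m : 'I_n.+1 => \sum_(j < n.+1) 'C(m, j) * 'C(n - m, j) * j`!));
  last by move=> i _; apply: tm_closed.
rewrite exchange_big /=.
rewrite (eq_bigr (fun j : 'I_n.+1 => j`! * 'C(n.+1, j.*2.+1))); last first.
  move=> j _; rewrite -addnn -vdm big_distrr /=; apply: eq_bigr => i _.
  by rewrite mulnC.
rewrite big_mkord (big_ord_widen _ (fun k => 'C(n, k) * (k./2)`!) (_ : n.+1 <= (n.+1).*2)); last by lia.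
rewrite [RHS]big_mkcond (eq_bigr (fun i : 'I_(n.+1).*2 => 'C(n, i) * (i./2)`!)); last first.
  move=> i _; case: ifP => // h; rewrite bin_small //; lia.
rewrite (sum_pairs (fun i => 'C(n, i) * (i./2)`!)); apply: eq_bigr => j _.
rewrite doubleK /= uphalf_double binS mulnDr addnC; lia.
Qed.


Section A.
Variable n : nat.
Notation T := 'I_n.

Lemma sb_pblock (P : {set {set T}}) i j : is_set_partition P ->
  same_block P i j = (j \in pblock P i).
Proof.
case/and3P => /eqP covP trivP _.
have ic : forall k : T, k \in cover P by move=> k; rewrite covP inE.
apply/existsP/idP.
  move=> [B /and3P [BP iB jB]].
  by rewrite (def_pblock trivP BP iB).
move=> jP; exists (pblock P i); rewrite pblock_mem ?ic //= jP andbT.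
by rewrite mem_pblock ic.
Qed.

Lemma sb_refl (P : {set {set T}}) i : is_set_partition P -> same_block P i i.
Proof.
move=> hP; rewrite sb_pblock // mem_pblock.
by case/and3P: hP => /eqP -> _ _; rewrite inE.
Qed.

Lemma sb_eq (P : {set {set T}}) i j : is_set_partition P ->
  same_block P i j = (pblock P i == pblock P j).
Proof.
move=> hP; rewrite sb_pblock // eq_pblock //; first by case/and3P: hP.
by case/and3P: hP => /eqP -> _ _; rewrite inE.
Qed.

Lemma sb_sym (P : {set {set T}}) i j : is_set_partition P ->
  same_block P i j = same_block P j i.
Proof. by move=> hP; rewrite !sb_eq // eq_sym. Qed.

Lemma sb_trans (P : {set {set T}}) i j k : is_set_partition P ->
  same_block P i j -> same_block P j k -> same_block P i k.
Proof. by move=> hP; rewrite !sb_eq // => /eqP -> . Qed.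

Lemma part_eq (P P' : {set {set T}}) : is_set_partition P -> is_set_partition P' ->
  (forall i j, same_block P i j = same_block P' i j) -> P = P'.
Proof.
have sub : forall P P' : {set {set T}}, is_set_partition P -> is_set_partition P' ->
  (forall i j, same_block P i j = same_block P' i j) -> P \subset P'.
  move=> Q Q' hQ hQ' e; apply/subsetP => B BQ.
  have := hQ; case/and3P => _ trivQ nz.
  have /set0Pn [x xB] : B != set0 by apply: contraNneq nz => <-.
  have -> : B = pblock Q x by rewrite (def_pblock trivQ BQ xB).
  have -> : pblock Q x = pblock Q' x.
    by apply/setP => y; rewrite -!sb_pblock // e.
  rewrite pblock_mem //.
  by case/and3P: hQ' => /eqP -> _ _; rewrite inE.
move=> hP hP' e; apply/eqP; rewrite eqEsubset !sub //.
Qed.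


Lemma col1E (c : {ffun T -> 'I_2}) i : col_is c i 1 = ~~ col_is c i 2.
Proof. by rewrite /col_is /=; case: (c i) => [[|[|k]] h]. Qed.

Lemma colE (c c' : {ffun T -> 'I_2}) i : col_is c i 2 = col_is c' i 2 -> c i = c' i.
Proof.
rewrite /col_is /= => h; apply: val_inj; move: h.
by case: (c i) => [[|[|k]] hk]; case: (c' i) => [[|[|k']] hk'].
Qed.

Lemma col_neq (c : {ffun T -> 'I_2}) i j : (c i != c j) = (col_is c i 2 != col_is c j 2).
Proof.
rewrite /col_is /=.
by case: (c i) => [[|[|k]] hk]; case: (c j) => [[|[|k']] hk'].
Qed.

Section Av.
Variables (P : {set {set T}}) (c : {ffun T -> 'I_2}).
Hypothesis hav : (P, c) \in avoiders n.

Lemma av_part : is_set_partition P.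
Proof. by move: hav; rewrite inE => /and4P []. Qed.

Lemma av_prefix (i j : T) : i < j -> col_is c j 2 -> col_is c i 2.
Proof.
move=> ij cj; apply: contraT; rewrite -col1E => ci.
move: hav; rewrite inE => /and4P [_ _ h12 h22].
case sb: (same_block P i j).
  by case/negP: h12; apply/existsP; exists i; apply/existsP; exists j; rewrite ij sb ci cj.
by case/negP: h22; apply/existsP; exists i; apply/existsP; exists j; rewrite ij sb ci cj.
Qed.

Lemma av_pair (i j : T) : i < j -> same_block P i j -> col_is c i 2 /\ col_is c j 1.
Proof.
move=> ij sb; move: hav; rewrite inE => /and4P [_ h11 h12 _].
have ne : c i != c j.
  by apply/negP => e; case/negP: h11; apply/existsP; exists i; apply/existsP; exists j; rewrite ij sb e.
have ci : col_is c i 2.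
  apply: contraT; rewrite -col1E => ci; case/negP: h12; apply/existsP; exists i; apply/existsP; exists j.
  rewrite ij sb ci /=; move: ne; rewrite col_neq; move: ci; rewrite col1E.
  by case: (col_is c i 2); case: (col_is c j 2).
by split => //; move: ne; rewrite col_neq ci col1E; case: (col_is c j 2).
Qed.

Lemma av_diff (u v : T) : u != v -> same_block P u v -> c u != c v.
Proof.
move=> nuv sb.
case: (ltngtP u v) => h.
- have [h1 h2] := av_pair h sb. by rewrite col_neq h1 col1E in h2 *; case: (col_is c v 2) h2.
- rewrite sb_sym in sb; last exact: av_part.
  have [h1 h2] := av_pair h sb. by rewrite col_neq h1 col1E in h2 *; case: (col_is c u 2) h2.
- by move: nuv; rewrite (val_inj h) eqxx.
Qed.

Lemma av_three (u v w : T) : u != v -> u != w -> v != w ->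
  same_block P u v -> same_block P u w -> False.
Proof.
move=> nuv nuw nvw suv suw.
have svw : same_block P v w.
  by apply: (sb_trans av_part _ suw); rewrite sb_sym //; exact: av_part.
move: (av_diff nuv suv) (av_diff nuw suw) (av_diff nvw svw).
case: (c u) => [[|[|k]] hk]; case: (c v) => [[|[|k']] hk']; case: (c w) => [[|[|k'']] hk''] //.
Qed.

End Av.

Lemma lt_neq (i j : T) : i < j -> i != j.
Proof. by move=> h; apply/eqP => e; move: h; rewrite e ltnn. Qed.

Definition pre (m : nat) : {set T} := [set i : T | i < m].

Lemma card_pre m : m <= n -> #|pre m| = m.
Proof.
elim: m => [|m IH] hm.
  apply/eqP; rewrite cards_eq0; apply/eqP/setP => i; by rewrite !inE.
have hmn : m < n by [].
rewrite (_ : pre m.+1 = Ordinal hmn |: pre m).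
  by rewrite cardsU1 IH ?(ltnW hmn) // inE ltnn.
apply/setP => i; rewrite !inE ltnS leq_eqVlt; congr (_ || _).
Qed.

Lemma prefix_pre (A : {set T}) : (forall i j : T, i < j -> j \in A -> i \in A) -> A = pre #|A|.
Proof.
move=> hA; apply/setP => i; rewrite inE; apply/idP/idP => iA.
  have sub : pre i.+1 \subset A.
    apply/subsetP => j; rewrite inE ltnS leq_eqVlt => /orP [/eqP e | jl].
      by have -> : j = i by apply: val_inj.
    exact: hA jl iA.
  by have := subset_leq_card sub; rewrite card_pre.
apply: contraLR iA => niA; rewrite -leqNgt.
have sub : A \subset pre i.
  apply/subsetP => j jA; rewrite inE ltnNge leq_eqVlt; apply/negP => /orP [/eqP e | ij].
    have e' : i = j by apply: val_inj.
    by rewrite e' jA in niA.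
  by rewrite (hA _ _ ij jA) in niA.
  by have := subset_leq_card sub; rewrite card_pre // ltnW.
Qed.

Definition Aof (c : {ffun T -> 'I_2}) : {set T} := [set i | col_is c i 2].
Definition Mof (P : {set {set T}}) : {set T * T} :=
  [set p : T * T | (p.1 < p.2) && same_block P p.1 p.2].
Definition phi (x : colored_partition n) : 'I_n.+1 * {set T * T} :=
  (inord #|Aof x.2|, Mof x.1).
Definition Rel (M : {set T * T}) : rel T :=
  fun i j => [|| i == j, (i, j) \in M | (j, i) \in M].
Definition psi (z : 'I_n.+1 * {set T * T}) : colored_partition n :=
  (equivalence_partition (Rel z.2) setT,
   [ffun i : T => if i < z.1 then (ord_max : 'I_2) else ord0]).
Definition Z := [set z : 'I_n.+1 * {set T * T} | matchb (pre z.1) (~: pre z.1) z.2].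

Lemma sb_M (P : {set {set T}}) i j : is_set_partition P ->
  same_block P i j = Rel (Mof P) i j.
Proof.
move=> hP; rewrite /Rel !inE /=.
case: (ltngtP i j) => h.
- by rewrite (negbTE (lt_neq h)) /= orbF.
- by rewrite eq_sym (negbTE (lt_neq h)) /= sb_sym.
- have e : i = j by apply: val_inj.
  by rewrite e eqxx sb_refl.
Qed.

Lemma Aof_pre (P : {set {set T}}) (c : {ffun T -> 'I_2}) : (P, c) \in avoiders n -> Aof c = pre #|Aof c|.
Proof.
move=> hx; apply: prefix_pre => i j ij; rewrite !inE; exact (@av_prefix P c hx i j ij).
Qed.

Lemma cardA c : #|Aof c| < n.+1.
Proof. by rewrite ltnS; apply: (leq_trans (max_card _)); rewrite card_ord. Qed.

Lemma phi_inj : {in avoiders n &, injective phi}.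
Proof.
move=> [P c] [P' c'] hx hy; rewrite /phi /= => e; case: e => e1 e2.
have ce : #|Aof c| = #|Aof c'|.
  by move/(congr1 (@nat_of_ord n.+1)): e1; rewrite !inordK ?cardA.
have Ae : Aof c = Aof c' by rewrite (Aof_pre hx) (Aof_pre hy) ce.
have -> : c = c'.
  apply/ffunP => i; apply: colE.
  by move/setP: Ae => /(_ i); rewrite !inE.
have -> // : P = P'.
apply: part_eq; [exact: av_part hx | exact: av_part hy |].
by move=> i j; rewrite !sb_M ?e2 //; [exact: av_part hy | exact: av_part hx].
Qed.

Lemma phi_sub x : x \in avoiders n -> phi x \in Z.
Proof.
case: x => P c hx; rewrite inE /phi /= inordK ?cardA // -(Aof_pre hx).
have hP := av_part hx.
apply/matchP; split.
  move=> p; rewrite inE => /andP [lt sb]; have [h1 h2] := av_pair hx lt sb.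
  by rewrite !inE h1 -col1E.
move=> p q; rewrite !inE => /andP [lp sp] /andP [lq sq].
apply/idP/idP => /eqP e.
  apply: contraT => ne; exfalso.
  apply: (av_three hx (u := p.1) (v := p.2) (w := q.2)) => //.
  - exact: lt_neq.
  - by rewrite e; exact: lt_neq.
  - by rewrite e.
apply: contraT => ne; exfalso.
apply: (av_three hx (u := p.2) (v := p.1) (w := q.1)) => //.
- by rewrite eq_sym; exact: lt_neq.
- by rewrite e eq_sym; exact: lt_neq.
- by rewrite sb_sym.
- by rewrite e sb_sym.
Qed.

Section Psi.
Variables (m : 'I_n.+1) (M : {set T * T}).
Hypothesis hm : matchb (pre m) (~: pre m) M.

Lemma M1 p : p \in M -> p.1 < m /\ m <= p.2.
Proof.
by case/matchP: hm => h1 _ /h1 []; rewrite !inE -leqNgt.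
Qed.

Lemma M2 p q : p \in M -> q \in M -> (p.1 == q.1) = (p.2 == q.2).
Proof. by case/matchP: hm => _ h2; apply: h2. Qed.

Lemma Rsym i j : Rel M i j = Rel M j i.
Proof. by rewrite /Rel eq_sym; case: ((i, j) \in M); case: ((j, i) \in M); rewrite ?orbT ?orbF. Qed.

Lemma Rtrans i j k : Rel M i j -> Rel M j k -> Rel M i k.
Proof.
case: (eqVneq i j) => [-> _ h|nij]; first exact: h.
case: (eqVneq j k) => [<- h _|njk]; first exact: h.
rewrite /Rel (negbTE nij) (negbTE njk) /=.
move=> /orP [ij | ji] /orP [jk | kj].
- have [_ h] := M1 ij; have [h' _] := M1 jk; move: h h' => /= h h'.
  by move: (leq_ltn_trans h h'); rewrite ltnn.
- by have := M2 ij kj; rewrite /= eqxx => /eqP ->; rewrite eqxx.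
- by have := M2 ji jk; rewrite /= eqxx => /esym /eqP ->; rewrite eqxx.
- have [h _] := M1 ji; have [_ h'] := M1 kj; move: h h' => /= h h'.
  by move: (leq_ltn_trans h' h); rewrite ltnn.
Qed.

Lemma Requiv : {in [set: T] & &, equivalence_rel (Rel M)}.
Proof.
move=> x y z _ _ _; split; first by rewrite /Rel eqxx.
move=> xy; apply/idP/idP => h.
  by apply: Rtrans h; rewrite Rsym.
exact: Rtrans xy h.
Qed.

Lemma psi_part : is_set_partition (psi (m, M)).1.
Proof. exact: equivalence_partitionP Requiv. Qed.

Lemma sbR u v : same_block (psi (m, M)).1 u v = Rel M u v.
Proof.
by rewrite sb_pblock ?psi_part //= pblock_equivalence_partition ?inE //; exact: Requiv.
Qed.

Lemma colpsi u : col_is (psi (m, M)).2 u 2 = (u < m).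
Proof. by rewrite /col_is /= ffunE; case: ifP. Qed.

Lemma psi_av : psi (m, M) \in avoiders n.
Proof.
rewrite inE psi_part /=; apply/and3P; split.
- apply/negP => /existsP [i /existsP [j /andP [/andP [ij sb] /eqP e]]].
  have : col_is (psi (m, M)).2 i 2 = col_is (psi (m, M)).2 j 2 by rewrite /col_is e.
  rewrite !colpsi; move: sb; rewrite sbR /Rel (negbTE (lt_neq ij)) /= => /orP [h | h].
    have [h1 h2] := M1 h; move: h1 h2 => /= h1 h2; rewrite h1 => /esym jm.
    by move: h2; rewrite leqNgt jm.
  have [h1 h2] := M1 h; move=> _; move: h1 h2 => /= h1 h2.
  by move: (leq_ltn_trans h2 (ltn_trans ij h1)); rewrite ltnn.
- apply/negP => /existsP [i /existsP [j /and4P [ij _ ci cj]]].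
  by move: ci cj; rewrite col1E !colpsi => ci cj; rewrite (ltn_trans ij cj) in ci.
- apply/negP => /existsP [i /existsP [j /and4P [ij _ ci cj]]].
  by move: ci cj; rewrite col1E !colpsi => ci cj; rewrite (ltn_trans ij cj) in ci.
Qed.

Lemma phipsi : phi (psi (m, M)) = (m, M).
Proof.
rewrite /phi.
have -> : Aof (psi (m, M)).2 = pre m.
  by apply/setP => u; rewrite !inE colpsi.
rewrite card_pre ?inord_val; last by rewrite -ltnS ltn_ord.
have -> // : Mof (psi (m, M)).1 = M.
apply/setP => p; rewrite inE sbR /Rel.
apply/idP/idP.
  case/andP => lt /orP [/eqP e | /orP [h | h]].
  - by move: lt; rewrite e ltnn.
  - by rewrite -surjective_pairing in h.
  - have [h1 h2] := M1 h; move: h1 h2 => /= h1 h2.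
    by move: (leq_ltn_trans h2 (ltn_trans lt h1)); rewrite ltnn.
move=> pM; have [h1 h2] := M1 pM.
rewrite -surjective_pairing pM orbT andbT.
exact: leq_trans h1 h2.
Qed.

End Psi.

Lemma sumT (U : finType) (P : pred U) : \sum_i (P i : nat) = #|[set i | P i]|.
Proof.
rewrite -sum1_card [RHS]big_mkcond /=; apply: eq_bigr => i _.
by rewrite inE; case: (P i).
Qed.

Lemma card_av : #|avoiders n| = \sum_(m < n.+1) Q (pre m) (~: pre m).
Proof.
rewrite -(card_in_imset phi_inj).
have -> : phi @: avoiders n = Z.
  apply/setP => z; apply/imsetP/idP.
    by move=> [x hx ->]; apply: phi_sub.
  case: z => m M; rewrite inE /= => hz.
  by exists (psi (m, M)); [apply: psi_av | rewrite phipsi].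
rewrite /Q (eq_bigr (fun m : 'I_n.+1 => \sum_M (matchb (pre m) (~: pre m) M : nat))); last first.
  by move=> m _; rewrite sumT.
rewrite pair_big /= -sumT; apply: eq_big => // z.
Qed.

End A.

Unset Implicit Arguments.

Theorem mainTheorem14 (n : nat) : 1 <= n ->
  #|avoiders n| = \sum_(0 <= k < n.+1) 'C(n, k) * (k./2)`!.
Proof.
move=> _; rewrite card_av -partC; apply: eq_bigr => m _.
have hm : m <= n by rewrite -ltnS ltn_ord.
rewrite (Q_tm _ (@card_pre n m hm)).
have := cardsC (pre n m); rewrite (@card_pre n m hm) card_ord => e.
have e' : #|~: pre n m| = n - m by apply: (@addnI m); rewrite subnKC.
by rewrite e'.
Qed.
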